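(* Let $d \geq 3$, let $C \subset \mathbb{R}^d$ be a smooth $d$-dimensional combinatorial cube with faces labeled $F_I^J$ via a fixed face-poset isomorphism with $[0,1]^d$, and let $x,y,z \in \{1,\dots,d\}$ be distinct. Suppose that the faces $F_{xz}$ and $F_{x\bar z}$ are parallel and that the faces $F_{yz}$ and $F_{y\bar z}$ are parallel. Then $F_z$ is parallel to $F_{\bar z}$.
   Context: A lattice polytope is the convex hull of finitely many points of $\mathbb{Z}^d$. A $d$-dimensional polytope is simple if each vertex lies in exactly $d$ edges; the primitive edge directions at a vertex are the smallest lattice vectors along its incident edges; a $d$-dimensional lattice polytope in $\mathbb{R}^d$ is smooth if it is simple and at every vertex the primitive edge directions form a basis of $\mathbb{Z}^d$. A $d$-dimensional combinatorial cube is a polytope $C$ whose face poset is isomorphic to that of $[0,1]^d$. For disjoint $I,J \subseteq \{1,\dots,d\}$ the face of $[0,1]^d$ given by $x_k=0$ for $k\in I$ and $x_k = 1$ for $k \in J$ is denoted $F_I^J$, and the corresponding face of $C$ under the fixed isomorphism is also denoted $F_I^J$. Notation: elements of $J$ are written with a bar and elements of $I$ without, e.g. $F_{x\bar z} = F_{\{x\}}^{\{z\}}$, $F_{\bar z} = F_{\emptyset}^{\{z\}}$, $F_z = F_{\{z\}}^{\emptyset}$. Two faces $F,G$ are parallel if $\mathrm{lin}(F)=\mathrm{lin}(G)$, where $\mathrm{lin}(F)$ is the linear subspace parallel to the affine hull of $F$. *)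

(* Defs.v *)
From HB Require Import structures.
From mathcomp Require Import all_boot all_order all_algebra.
From mathcomp Require Import reals.
Set Implicit Arguments. Unset Strict Implicit. Unset Printing Implicit Defensive.
Import Order.TTheory GRing.Theory Num.Theory.
Local Open Scope ring_scope.

Section Polytopes.
Variables (R : realType) (d : nat).
Local Notation pt := 'rV[R]_d.

Definition seteq (F G : pt -> Prop) : Prop := forall x, F x <-> G x.
Definition subset (F G : pt -> Prop) : Prop := forall x, F x -> G x.

Definition dot (a x : pt) : R := \sum_(j < d) a 0 j * x 0 j.

Definition is_lattice_point (x : pt) : Prop := forall j, x 0 j \is a Num.int.

Definition conv (S : pt -> Prop) : pt -> Prop := fun x =>
  exists (n : nat) (lam : 'I_n -> R) (p : 'I_n -> pt),
    (forall i, 0 <= lam i) /\ \sum_(i < n) lam i = 1 /\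
    (forall i, S (p i)) /\ x = \sum_(i < n) lam i *: p i.

Definition lattice_polytope (P : pt -> Prop) : Prop :=
  exists (n : nat) (p : 'I_n -> pt),
    (forall i, is_lattice_point (p i)) /\
    seteq P (conv (fun x => exists i, x = p i)).

(* faces: intersections with supporting hyperplanes (includes the empty face and P) *)
Definition is_face (P F : pt -> Prop) : Prop :=
  exists (a : pt) (b : R), (forall x, P x -> dot a x <= b) /\
    seteq F (fun x => P x /\ dot a x = b).

(* lin(F): the linear subspace parallel to the affine hull of F *)
Definition lin (F : pt -> Prop) : pt -> Prop := fun w =>
  exists (n : nat) (c : 'I_n -> R) (p q : 'I_n -> pt),
    (forall i, F (p i) /\ F (q i)) /\ w = \sum_(i < n) c i *: (p i - q i).

Definition parallel (F G : pt -> Prop) : Prop := seteq (lin F) (lin G).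

Definition full_dim (P : pt -> Prop) : Prop := seteq (lin P) (fun _ => True).

Definition is_vertex (P : pt -> Prop) (p : pt) : Prop := is_face P (fun x => x = p).

Definition is_edge (P E : pt -> Prop) : Prop :=
  is_face P E /\ exists w : pt, w != 0 /\ seteq (lin E) (fun v => exists c : R, v = c *: w).

Definition prim_dir (p : pt) (E : pt -> Prop) (u : pt) : Prop :=
  is_lattice_point u /\
  (exists (t : R) (q : pt), 0 < t /\ E q /\ q != p /\ u = t *: (q - p)) /\
  (forall s : R, 0 < s -> is_lattice_point (s *: u) -> 1 <= s).

Definition Zbasis (u : 'I_d -> pt) : Prop :=
  (forall i, is_lattice_point (u i)) /\
  (forall z, is_lattice_point z ->
     exists k : 'I_d -> int, z = \sum_(i < d) (k i)%:~R *: u i) /\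
  (forall k : 'I_d -> int, \sum_(i < d) (k i)%:~R *: u i = 0 -> forall i, k i = 0).

(* smooth d-dimensional lattice polytope: simple (each vertex lies in exactly d
   edges, enumerated injectively by e) and the primitive edge directions at every
   vertex form a basis of Z^d *)
Definition smooth (P : pt -> Prop) : Prop :=
  lattice_polytope P /\ full_dim P /\
  forall p, is_vertex P p ->
    exists (e : 'I_d -> (pt -> Prop)) (u : 'I_d -> pt),
      (forall i j, seteq (e i) (e j) -> i = j) /\
      (forall i, is_edge P (e i) /\ e i p) /\
      (forall E, is_edge P E -> E p -> exists i, seteq (e i) E) /\
      (forall i, prim_dir p (e i) (u i)) /\
      Zbasis u.

Definition unit_cube : pt -> Prop := fun x => forall k, 0 <= x 0 k <= 1.

Definition cube_face (I J : {set 'I_d}) : pt -> Prop := fun x =>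
  unit_cube x /\ (forall k, k \in I -> x 0 k = 0) /\ (forall k, k \in J -> x 0 k = 1).

(* phi is an isomorphism of face posets (ordered by inclusion) from the faces of
   [0,1]^d onto the faces of C; faces are identified up to set equality *)
Definition face_iso (C : pt -> Prop) (phi : (pt -> Prop) -> (pt -> Prop)) : Prop :=
  (forall F, is_face unit_cube F -> is_face C (phi F)) /\
  (forall F G, is_face unit_cube F -> is_face unit_cube G -> seteq F G ->
     seteq (phi F) (phi G)) /\
  (forall G, is_face C G -> exists F, is_face unit_cube F /\ seteq (phi F) G) /\
  (forall F G, is_face unit_cube F -> is_face unit_cube G ->
     (subset F G <-> subset (phi F) (phi G))).

Definition comb_cube (C : pt -> Prop) : Prop := exists phi, face_iso C phi.

Definition Cface (phi : (pt -> Prop) -> (pt -> Prop)) (I J : {set 'I_d}) : pt -> Prop :=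
  phi (cube_face I J).

End Polytopes.

(* Main.v *)
Require Import Defs.
From HB Require Import structures.
From mathcomp Require Import all_boot all_order all_algebra.
From mathcomp Require Import reals.
From mathcomp Require Import ring lra zify.
From Stdlib Require Import Classical ClassicalEpsilon.
Import Order.TTheory GRing.Theory Num.Theory.
Set Implicit Arguments. Unset Strict Implicit. Unset Printing Implicit Defensive.

Lemma max_exists (P : nat -> Prop) (d : nat) :
  P 0%N -> (forall r, P r -> (r <= d)%N) ->
  exists r, P r /\ forall r', P r' -> (r' <= r)%N.
Proof.
move=> P0 Pb; apply: NNPP => H.
have step : forall r, P r -> exists r', P r' /\ (r < r')%N.
  move=> r Pr; apply: NNPP => H2; apply: H; exists r; split => // r' Pr'.
  apply: NNPP => H3; apply: H2; exists r'; split => //; rewrite ltnNge; exact/negP.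
have: forall n, exists r, P r /\ (n <= r)%N.
  elim=> [|n [r [Pr le]]]; first by exists 0%N.
  have [r' [Pr' lt]] := step r Pr; exists r'; split => //; exact: leq_ltn_trans lt.
move/(_ d.+1) => [r [Pr le]]; have := Pb r Pr; lia.
Qed.

Section LinAlg.
Variables (R : realType) (d : nat).
Local Notation pt := 'rV[R]_d.
Local Open Scope ring_scope.

Definition Good (F : pt -> Prop) k (A : 'M[R]_(k, d)) :=
  exists p q : 'I_k -> pt, forall i, F (p i) /\ F (q i) /\ row i A = p i - q i.

Lemma linmx_ex (F : pt -> Prop) : exists M : 'M[R]_d, forall v, lin F v <-> (v <= M)%MS.
Proof.
pose P r := exists k (A : 'M[R]_(k, d)), Good F A /\ \rank A = r.
have P0 : P 0%N.
  exists 0%N, 0; split; last by rewrite mxrank0.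
  by exists (fun i => 0), (fun i => 0) => -[].
have Pb : forall r, P r -> (r <= d)%N by move=> r [k [A [_ <-]]]; exact: rank_leq_col.
have [r [[k [A [[p [q Hpq]] rA]]] Hmax]] := max_exists P0 Pb.
have diffA : forall u w, F u -> F w -> (u - w <= A)%MS.
  move=> u w Fu Fw; apply: NNPP => /negP nsub.
  have : P (\rank (col_mx A (u - w))).
    exists (k + 1)%N, (col_mx A (u - w)); split => //.
    exists (fun i => match split i with inl j => p j | inr _ => u end).
    exists (fun i => match split i with inl j => q j | inr _ => w end).
    move=> i; have [s ->] : exists s, i = unsplit s by exists (split i); rewrite splitK.
    rewrite unsplitK; case: s => j /=; first by rewrite rowKu; exact: Hpq.
    by rewrite rowKd row_id.
  move/Hmax; rewrite -rA => le.
  have sub : (A <= col_mx A (u - w))%MS by rewrite -addsmxE addsmxSl.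
  have [_ Heq] := mxrank_leqif_sup sub.
  have : (\rank A == \rank (col_mx A (u - w)))%N.
    by rewrite eqn_leq le andbT; exact: mxrankS.
  by rewrite Heq col_mx_sub submx_refl /=; apply/negP.
exists <<A>>%MS => v; rewrite genmxE; split.
  move=> [n [c [p' [q' [Hf ->]]]]].
  apply: summx_sub => i _; apply: scalemx_sub; have [? ?] := Hf i; exact: diffA.
move=> /submxP [w ->]; rewrite mulmx_sum_row.
exists k, (w 0), p, q; split; first by move=> i; have [? [? _]] := Hpq i.
by apply: eq_bigr => i _; have [_ [_ ->]] := Hpq i.
Qed.

Definition linmx (F : pt -> Prop) : 'M[R]_d :=
  proj1_sig (constructive_indefinite_description _ (linmx_ex F)).

Lemma linmxP F v : lin F v <-> (v <= linmx F)%MS.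
Proof. rewrite /linmx; case: constructive_indefinite_description => M /= H; exact: H. Qed.

Lemma lin_mono (F G : pt -> Prop) : Defs.subset F G -> Defs.subset (lin F) (lin G).
Proof.
move=> FG v [n [c [p [q [H ->]]]]]; exists n, c, p, q; split => // i.
by have [? ?] := H i; split; apply: FG.
Qed.

Lemma linmx_mono (F G : pt -> Prop) : Defs.subset F G -> (linmx F <= linmx G)%MS.
Proof.
move=> FG; apply/row_subP => i; apply/linmxP; apply: (lin_mono FG); apply/linmxP.
exact: row_sub.
Qed.

Lemma dot_sub (a u w : pt) : dot a (u - w) = dot a u - dot a w.
Proof. rewrite /dot -sumrB; apply: eq_bigr => j _; rewrite !mxE; ring. Qed.

Lemma dot_sumZ (a : pt) n (c : 'I_n -> R) (f : 'I_n -> pt) :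
  dot a (\sum_(i < n) c i *: f i) = \sum_(i < n) c i * dot a (f i).
Proof.
rewrite /dot; under eq_bigr => j _ do rewrite summxE mulr_sumr.
rewrite exchange_big; apply: eq_bigr => i _; rewrite mulr_sumr.
by apply: eq_bigr => j _; rewrite !mxE; ring.
Qed.

Lemma face_sub (P G : pt -> Prop) : is_face P G -> Defs.subset G P.
Proof. by move=> [a [b [_ H]]] x /H []. Qed.

Lemma keyS (C G1 G2 : pt -> Prop) p : is_face C G1 -> is_face C G2 ->
  G1 p -> G2 p -> Defs.subset (lin G2) (lin G1) -> Defs.subset G2 G1.
Proof.
move=> [a [b [_ H1]]] F2 G1p G2p L q G2q.
have Cq := face_sub F2 G2q.
have : lin G1 (q - p).
  apply: L; exists 1%N, (fun _ => 1), (fun _ => q), (fun _ => p); split => //.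
  by rewrite big_ord1 scale1r.
move=> [n [c [p' [q' [Hf E]]]]].
have : dot a (q - p) = 0.
  rewrite E dot_sumZ big1 // => i _.
  have [/H1 [_ e1] /H1 [_ e2]] := Hf i; by rewrite dot_sub e1 e2 subrr mulr0.
rewrite dot_sub => /eqP; rewrite subr_eq0 => /eqP E2; apply/H1; split => //.
by have [_ <-] := (H1 p).1 G1p.
Qed.


Definition cva (I J : {set 'I_d}) (k : 'I_d) : R :=
  if k \in I then -1 else if k \in J then 1 else 0.
Definition cvb (I J : {set 'I_d}) (k : 'I_d) : R :=
  if k \in I then 0 else if k \in J then 1 else 0.

Lemma g_facts (I J : {set 'I_d}) (x : pt) k :
  (k \in I -> k \notin J) -> 0 <= x 0 k <= 1 ->
  0 <= cvb I J k - cva I J k * x 0 k /\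
  (cvb I J k - cva I J k * x 0 k = 0 <-> ((k \in I -> x 0 k = 0) /\ (k \in J -> x 0 k = 1))).
Proof.
move=> dj /andP [x0 x1]; rewrite /cva /cvb.
case kI: (k \in I); case kJ: (k \in J) => //=.
- by have := dj kI; rewrite kJ.
- split; first lra. split=> [E|[H1 _]]; first by split; [move=> _; lra|].
  by rewrite H1 //; ring.
- split; first lra. split=> [E|[_ H2]]; first by split; [|move=> _; lra].
  by rewrite H2 //; ring.
- split; first lra. split => // _; ring.
Qed.

Lemma cube_face_is_face (I J : {set 'I_d}) :
  (forall k, k \in I -> k \notin J) -> is_face (@unit_cube R d) (cube_face I J).
Proof.
move=> dj; exists (\row_k cva I J k), (\sum_k cvb I J k).
have E : forall x : pt, \sum_k cvb I J k - dot (\row_k cva I J k) x =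
    \sum_k (cvb I J k - cva I J k * x 0 k).
  by move=> x; rewrite /dot -sumrB; apply: eq_bigr => k _; rewrite mxE.
split.
  move=> x cu; rewrite -subr_ge0 E; apply: sumr_ge0 => k _.
  exact: (g_facts (dj k) (cu k)).1.
move=> x; split.
  move=> [cu [HI HJ]]; split => //; apply/eqP; rewrite eq_sym -subr_eq0 E.
  apply/eqP; apply: big1 => k _; apply/(g_facts (dj k) (cu k)).2.
  by split; [apply: HI | apply: HJ].
move=> [cu e]; have S0 : \sum_k (cvb I J k - cva I J k * x 0 k) = 0.
  by rewrite -E e subrr.
have Hk := psumr_eq0P (fun k _ => (g_facts (dj k) (cu k)).1) S0.
split => //; split => k kin.
  by have [+ _] := ((g_facts (dj k) (cu k)).2).1 (Hk k isT); apply.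
by have [_ +] := ((g_facts (dj k) (cu k)).2).1 (Hk k isT); apply.
Qed.


Definition disj (I J : {set 'I_d}) := forall k, k \in I -> k \notin J.

Lemma cube_pt (I J : {set 'I_d}) : disj I J ->
  @cube_face R d I J (\row_m ((m \in J)%:R : R)).
Proof.
move=> dj; split; [|split] => k; rewrite mxE.
- by case: (k \in J); rewrite ?ler01 ?lexx.
- by move/dj/negbTE ->.
- by move ->.
Qed.

Lemma cube_strict (I J I' J' : {set 'I_d}) k : disj I J ->
  I' \subset I -> J' \subset J -> k \in I :|: J -> k \notin I' :|: J' ->
  Defs.subset (@cube_face R d I J) (@cube_face R d I' J') /\
  ~ Defs.subset (@cube_face R d I' J') (@cube_face R d I J).
Proof.
move=> dj sI sJ kin kout; split.
  move=> x [cu [HI HJ]]; split => //; split => m mi.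
    by apply: HI; apply: (subsetP sI).
  by apply: HJ; apply: (subsetP sJ).
pose p : pt := \row_m (if m == k then ((k \in I)%:R : R) else (m \in J)%:R).
move=> H.
have : @cube_face R d I' J' p.
  split; [|split] => m; rewrite mxE.
  - by case: (m == k); [case: (k \in I) | case: (m \in J)]; rewrite ?ler01 ?lexx.
  - move=> mi; case: eqP => [E|_].
      by move: kout; rewrite -E in_setU mi.
    by have := dj m (subsetP sI m mi) => /negbTE ->.
  - move=> mj; case: eqP => [E|_].
      by move: kout; rewrite -E in_setU mj orbT.
    by rewrite (subsetP sJ m mj).
move/H => [_ [HI HJ]].
move: kin; rewrite in_setU; case kI: (k \in I) => /= kJ.
  by have := HI k kI; rewrite mxE eqxx kI => /eqP; rewrite oner_eq0.
by have := HJ k kJ; rewrite mxE eqxx kI => /eqP; rewrite eq_sym oner_eq0.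
Qed.


Section Phi.
Variables (C : pt -> Prop) (phi : (pt -> Prop) -> (pt -> Prop)).
Hypothesis fi : face_iso C phi.
Local Notation G I J := (phi (@cube_face R d I J)).

Lemma phi_face I J : disj I J -> is_face C (G I J).
Proof. by move=> dj; apply: fi.1; apply: cube_face_is_face. Qed.

Lemma phi_sub I J I' J' : disj I J -> disj I' J' ->
  Defs.subset (@cube_face R d I J) (@cube_face R d I' J') <-> Defs.subset (G I J) (G I' J').
Proof.
move=> d1 d2; have [_ [_ [_ H]]] := fi; apply: H; exact: cube_face_is_face.
Qed.

Lemma phi_ne I J : disj I J -> exists p, G I J p.
Proof.
move=> dj; apply: NNPP => Hn.
pose E0 : pt -> Prop := fun x => unit_cube x /\ dot 0 x = 1.
have dot0 : forall x : pt, dot 0 x = 0.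
  by move=> x; rewrite /dot big1 // => j _; rewrite mxE mul0r.
have fE : is_face (@unit_cube R d) E0.
  exists 0, 1; split; last by [].
  by move=> x _; rewrite dot0 ler01.
have [_ [_ [_ H]]] := fi.
have : Defs.subset (phi (@cube_face R d I J)) (phi E0).
  by move=> p Gp; exfalso; apply: Hn; exists p.
move/(H _ _ (cube_face_is_face dj) fE)/(_ _ (cube_pt dj)) => [_].
by rewrite dot0 => /eqP; rewrite eq_sym oner_eq0.
Qed.

Lemma rank_strict (G1 G2 : pt -> Prop) p : is_face C G1 -> is_face C G2 ->
  G1 p -> Defs.subset G1 G2 -> ~ Defs.subset G2 G1 ->
  (\rank (linmx G1) < \rank (linmx G2))%N.
Proof.
move=> f1 f2 G1p s12 ns.
have le := linmx_mono s12.
have [r1 r2] := mxrank_leqif_sup le.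
rewrite ltn_neqAle r1 andbT r2; apply/negP => le2.
apply: ns; apply: (keyS f1 f2 G1p (s12 _ G1p)) => v /linmxP lv.
apply/linmxP; exact: submx_trans le2.
Qed.

Lemma cube_rank_lt (I J I' J' : {set 'I_d}) k : disj I J ->
  I' \subset I -> J' \subset J -> k \in I :|: J -> k \notin I' :|: J' ->
  (\rank (linmx (G I J)) < \rank (linmx (G I' J')))%N.
Proof.
move=> dj sI sJ kin kout.
have dj' : disj I' J'.
  move=> m mi; apply/negP => mj.
  by have := dj m (subsetP sI m mi); rewrite (subsetP sJ m mj).
have [s ns] := cube_strict dj sI sJ kin kout.
have [p Gp] := phi_ne dj.
apply: (rank_strict (phi_face dj) (phi_face dj') Gp).
  exact/(phi_sub dj dj').
by move/(phi_sub dj' dj).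
Qed.


Lemma rank_lower n : forall I J, disj I J -> (#|I :|: J| + n = d)%N ->
  (n <= \rank (linmx (G I J)))%N.
Proof.
elim: n => [//|n IH] I J dj cardE.
have : (0 < #|~: (I :|: J)|)%N.
  have := cardsC (I :|: J); rewrite card_ord; lia.
rewrite card_gt0 => /set0Pn [k]; rewrite in_setC => kout.
have dj2 : disj (k |: I) J.
  move=> m; rewrite in_setU1 => /orP [/eqP ->|mi]; last exact: dj.
  by apply/negP => kJ; move: kout; rewrite in_setU kJ orbT.
have := IH (k |: I) J dj2.
rewrite -setUA cardsU1 kout => H.
have {H} H : (n <= \rank (linmx (G (k |: I) J)))%N.
  by apply: H; move: (#|I :|: J|) cardE => c; simpl; lia.
have lt := @cube_rank_lt (k |: I) J I J k dj2 (subsetUr _ _) (subxx _)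
  ltac:(by rewrite -setUA setU11) kout.
exact: leq_ltn_trans H lt.
Qed.

Lemma rank_upper m : forall I J, disj I J -> #|I :|: J| = m ->
  (\rank (linmx (G I J)) + m <= d)%N.
Proof.
elim: m => [|m IH] I J dj cardE; first by rewrite addn0 rank_leq_col.
have : (0 < #|I :|: J|)%N by rewrite cardE.
rewrite card_gt0 => /set0Pn [k kin].
have dj2 : disj (I :\ k) (J :\ k).
  move=> x; rewrite !in_setD1 => /andP [xk xi]; rewrite xk /=; exact: dj.
have E : (I :\ k) :|: (J :\ k) = (I :|: J) :\ k by rewrite setDUl.
have := IH (I :\ k) (J :\ k) dj2.
rewrite E; have := cardsD1 k (I :|: J); rewrite kin cardE /= => c.
move/(_ ltac:(move: (#|(I :|: J) :\ k|) c => q c; lia)) => H.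
have lt := @cube_rank_lt I J (I :\ k) (J :\ k) k dj (subsetDl _ _) (subsetDl _ _) kin
  ltac:(by rewrite E setD11).
by rewrite addnS -addSn; exact: leq_trans (leq_add lt (leqnn m)) H.
Qed.

Lemma rank_eq I J : disj I J -> (\rank (linmx (G I J)) + #|I :|: J| = d)%N.
Proof.
move=> dj; have U := rank_upper dj (erefl _).
have L := @rank_lower (d - #|I :|: J|) I J dj.
have := cardsC (I :|: J); rewrite card_ord.
move: U L; move: (\rank _) (#|I :|: J|) (#|~: (I :|: J)|) => r a b U L c.
have := L ltac:(lia); lia.
Qed.


Lemma cube_mono (I J I' J' : {set 'I_d}) : I' \subset I -> J' \subset J ->
  Defs.subset (@cube_face R d I J) (@cube_face R d I' J').
Proof.
move=> sI sJ x [cu [HI HJ]]; split => //; split => m mi.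
  by apply: HI; apply: (subsetP sI).
by apply: HJ; apply: (subsetP sJ).
Qed.

Lemma Gmx_mono (I J I' J' : {set 'I_d}) : disj I J -> disj I' J' ->
  I' \subset I -> J' \subset J -> (linmx (G I J) <= linmx (G I' J'))%MS.
Proof.
move=> d1 d2 sI sJ; apply: linmx_mono; apply/(phi_sub d1 d2); exact: cube_mono.
Qed.

End Phi.

Lemma par_sub (F1 F2 : pt -> Prop) : parallel F1 F2 -> (linmx F2 <= linmx F1)%MS.
Proof.
move=> P; apply/row_subP => i; apply/linmxP; apply/P; apply/linmxP; exact: row_sub.
Qed.

End LinAlg.

Lemma arith1 (a b c n : nat) : (a + 1 = n -> b + 2 = n -> b < c -> a <= c)%N.
Proof. lia. Qed.
Lemma arith2 (a b n : nat) : (a + 1 = n -> b + 1 = n -> a == b)%N.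
Proof. lia. Qed.

Theorem corollary3p2 (R : realType) (d : nat) (C : 'rV[R]_d -> Prop)
  (phi : ('rV[R]_d -> Prop) -> ('rV[R]_d -> Prop)) (x y z : 'I_d) :
  3 <= d ->
  smooth C ->
  face_iso C phi ->
  x != y -> y != z -> x != z ->
  parallel (Cface phi [set x; z] set0) (Cface phi [set x] [set z]) ->
  parallel (Cface phi [set y; z] set0) (Cface phi [set y] [set z]) ->
  parallel (Cface phi [set z] set0) (Cface phi set0 [set z]).
Proof.
move=> d3 _ fi xy yz xz Px Py.
rewrite /Cface.
have dj0 : forall I : {set 'I_d}, disj I set0 by move=> I k _; rewrite in_set0.
have dj0' : forall J : {set 'I_d}, disj set0 J by move=> J k; rewrite in_set0.
have djx : disj [set x] [set z] by move=> k; rewrite !in_set1 => /eqP ->.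
have djy : disj [set y] [set z] by move=> k; rewrite !in_set1 => /eqP ->.
set Mz := linmx (phi (cube_face [set z] set0)).
set Mz' := linmx (phi (cube_face set0 [set z])).
set Mxz := linmx (phi (cube_face [set x; z] set0)).
set Myz := linmx (phi (cube_face [set y; z] set0)).
set Mxz' := linmx (phi (cube_face [set x] [set z])).
set Myz' := linmx (phi (cube_face [set y] [set z])).
have rz : (\rank Mz + 1 = d)%N.
  by have := rank_eq fi (dj0 [set z]); rewrite setU0 cards1.
have rz' : (\rank Mz' + 1 = d)%N.
  by have := rank_eq fi (dj0' [set z]); rewrite set0U cards1.
have rxz : (\rank Mxz + 2 = d)%N.
  by have := rank_eq fi (dj0 [set x; z]); rewrite setU0 cards2 xz.
have s1 : (Mxz <= Mz)%MS.
  by apply: (Gmx_mono fi) => //; rewrite ?sub0set // sub1set !inE eqxx orbT.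
have s2 : (Myz <= Mz)%MS.
  by apply: (Gmx_mono fi) => //; rewrite ?sub0set // sub1set !inE eqxx orbT.
have s3 : (Mxz' <= Mz')%MS by apply: (Gmx_mono fi) => //; rewrite sub0set.
have s4 : (Myz' <= Mz')%MS by apply: (Gmx_mono fi) => //; rewrite sub0set.
have p1 : (Mxz <= Mxz')%MS by apply: par_sub; move=> v; split => /Px.
have p2 : (Myz <= Myz')%MS by apply: par_sub; move=> v; split => /Py.
have nsub : ~ (Myz <= Mxz)%MS.
  move=> H.
  have djxyz : disj [set x; y; z] set0 by [].
  have [p Gp] := phi_ne fi djxyz.
  have sx : Defs.subset (phi (cube_face [set x; y; z] set0)) (phi (cube_face [set x; z] set0)).
    apply/(phi_sub fi) => //; apply: cube_mono => //.
    by apply/subsetP => k; rewrite !inE => /orP [] ->; rewrite ?orbT.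
  have sy : Defs.subset (phi (cube_face [set x; y; z] set0)) (phi (cube_face [set y; z] set0)).
    apply/(phi_sub fi) => //; apply: cube_mono => //.
    by apply/subsetP => k; rewrite !inE => /orP [] ->; rewrite ?orbT.
  have := keyS (phi_face fi (dj0 [set x; z])) (phi_face fi (dj0 [set y; z])) (sx _ Gp) (sy _ Gp).
  have L : Defs.subset (lin (phi (cube_face [set y; z] set0))) (lin (phi (cube_face [set x; z] set0))).
    by move=> v /linmxP lv; apply/linmxP; exact: submx_trans H.
  move/(_ L)/(phi_sub fi (dj0 _) (dj0 _)).
  move/(_ (\row_m ((m == x)%:R : R))%R) => /= H2.
  have : @cube_face R d [set x; z] set0 (\row_m ((m == x)%:R : R))%R.
    apply: H2; split; [|split] => k; rewrite mxE.
    - by case: (k == x); rewrite ?ler01 ?lexx.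
    - rewrite !in_setU !in_set1 => /orP [] /eqP ->.
        by rewrite eq_sym (negbTE xy).
      by rewrite eq_sym (negbTE xz).
    - by rewrite in_set0.
  move=> [_ [HI _]]; have := HI x; rewrite !inE eqxx mxE eqxx => /(_ isT) /eqP.
  by rewrite oner_eq0.
have lt1 : (\rank Mxz < \rank (Mxz + Myz)%MS)%N.
  have [r1 r2] := mxrank_leqif_sup (addsmxSl Mxz Myz).
  rewrite ltn_neqAle r1 andbT r2; apply/negP => H; apply: nsub.
  exact: submx_trans (addsmxSr _ _) H.
have ss : ((Mxz + Myz)%MS <= Mz)%MS by rewrite addsmx_sub s1 s2.
have e1 : (Mz <= Mxz + Myz)%MS.
  have [r1 r2] := mxrank_leqif_sup ss; rewrite -r2 eqn_leq r1 /=.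
  exact: arith1 rz rxz lt1.
have e2 : (Mz <= Mz')%MS.
  apply: submx_trans e1 _; apply: submx_trans (addsmxS p1 p2) _.
  by rewrite addsmx_sub s3 s4.
have e3 : (Mz' <= Mz)%MS.
  have [r1 r2] := mxrank_leqif_sup e2; rewrite -r2.
  exact: arith2 rz rz'.
by move=> v; split => /linmxP h; apply/linmxP; [exact: submx_trans h e2 | exact: submx_trans h e3].
Qed.
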